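(* Fix $y_0\in[-1,1]$ and let $\mathfrak h_N(t)=N^{-(1+\alpha)}\mathfrak h(t,[Ny_0])$. For any initial configurations $\eta$, $$\lim_{L\to\infty}\lim_{N\to\infty}\frac{1}{N^{1+\alpha}}\log P_\eta\Big(\sup_{0\le t\le T}|\mathfrak h_N(t)|\ge L\Big)=-\infty.$$
   Context: Fix $\alpha>0$, $T>0$, $a\in(0,1/2)$ and $C^1$ functions $\rho_\pm:[0,T]\to[a,1-a]$. For $N\ge1$, $\Lambda_N=\{-N,\dots,N\}$, configurations $\eta\in\{0,1\}^{\Lambda_N}$. The process $(\eta_t)$ is the time-inhomogeneous Markov process with generator $L_{N,t}=N^{2+\alpha}(L_{\rm exc}+L_{b,t})$, $L_{\rm exc}f(\eta)=\sum_{x=-N}^{N-1}[f(\eta^{(x,x+1)})-f(\eta)]$, $L_{b,t}f(\eta)=\sum_{\sigma=\pm}\rho_\sigma(t)^{1-\eta(\sigma N)}(1-\rho_\sigma(t))^{\eta(\sigma N)}[f(\eta^{\sigma N})-f(\eta)]$ ($\eta^{(x,x+1)}$ exchanges occupations at $x,x+1$, $\eta^z$ flips the occupation at $z$); $P_\eta$ is its law started from $\eta$. For $x=-N-1,\dots,N$, $\mathfrak h(t,x)=\mathfrak h_+(t,x)-\mathfrak h_-(t,x)$, where $\mathfrak h_+(t,x)$ counts jumps from $x$ to $x+1$ during $[0,t]$ and $\mathfrak h_-(t,x)$ jumps from $x+1$ to $x$ (at $x=-N-1$ these are creations/annihilations at site $-N$, at $x=N$ annihilations/creations at site $N$). *)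

(* Defs.v *)
From Stdlib Require Import Reals ZArith List Lra ClassicalEpsilon.
From Coquelicot Require Import Coquelicot.
Import ListNotations.
Open Scope R_scope.

(** Configurations on Lambda_N = {-N..N}: only the values on Lambda_N matter. *)
Definition config := Z -> bool.

Inductive side := Plus | Minus.

Definition side_site (N : nat) (s : side) : Z :=
  match s with Plus => Z.of_nat N | Minus => (- Z.of_nat N)%Z end.

(** Effective transitions of the process (exchanges with equal occupations
    are no-ops and are not transitions). *)
Inductive move :=
  | HopR (x : Z)      (* particle jumps from x to x+1 *)
  | HopL (x : Z)      (* particle jumps from x+1 to x *)
  | Create (s : side)
  | Annih (s : side).

Definition bonds (N : nat) : list Z :=
  map (fun i => (- Z.of_nat N + Z.of_nat i)%Z) (seq 0 (2 * N)).

Definition moves (N : nat) : list move :=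
  flat_map (fun x => [HopR x; HopL x]) (bonds N) ++
  [Create Plus; Create Minus; Annih Plus; Annih Minus].

Definition setc (xi : config) (z : Z) (b : bool) : config :=
  fun y => if Z.eqb y z then b else xi y.

Definition apply_move (N : nat) (m : move) (xi : config) : config :=
  match m with
  | HopR x => setc (setc xi x false) (x + 1)%Z true
  | HopL x => setc (setc xi x true) (x + 1)%Z false
  | Create s => setc xi (side_site N s) true
  | Annih s => setc xi (side_site N s) false
  end.

(** Transition rates of L_{N,t} = N^{2+alpha} (L_exc + L_{b,t}). *)
Definition rate (N : nat) (alpha : R) (rp rm : R -> R) (t : R)
    (xi : config) (m : move) : R :=
  let c := Rpower (INR N) (2 + alpha) in
  let rho s := match s with Plus => rp t | Minus => rm t end in
  match m with
  | HopR x => if andb (xi x) (negb (xi (x + 1)%Z)) then c else 0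
  | HopL x => if andb (negb (xi x)) (xi (x + 1)%Z) then c else 0
  | Create s => if xi (side_site N s) then 0 else c * rho s
  | Annih s => if xi (side_site N s) then c * (1 - rho s) else 0
  end.

Definition sumR {A : Type} (f : A -> R) (l : list A) : R :=
  fold_right (fun a acc => f a + acc) 0 l.

Definition total_rate N alpha rp rm t xi : R :=
  sumR (rate N alpha rp rm t xi) (moves N).

(** Path history: list of (jump time, move), in chronological order. *)
Definition history := list (R * move).

(** Law of the path on [0,T] via the standard jump-density formula:
    [Qk N .. F k s xi h] is the contribution of paths that, from state xi at
    time s (with past jumps h), perform exactly k further jumps in (s,T],
    weighted by F applied to the full history. *)
Fixpoint Qk (N : nat) (alpha T : R) (rp rm : R -> R) (F : history -> R)
    (k : nat) (s : R) (xi : config) (h : history) : R :=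
  match k with
  | O => exp (- RInt (fun u => total_rate N alpha rp rm u xi) s T) * F h
  | S k' =>
      RInt (fun t =>
        exp (- RInt (fun u => total_rate N alpha rp rm u xi) s t) *
        sumR (fun m => rate N alpha rp rm t xi m *
                       Qk N alpha T rp rm F k' t (apply_move N m xi)
                          (h ++ [(t, m)])) (moves N)) s T
  end.

Definition expect (N : nat) (alpha T : R) (rp rm : R -> R) (eta : config)
    (F : history -> R) : R :=
  Series (fun k => Qk N alpha T rp rm F k 0 eta []).

Definition indic (P : history -> Prop) : history -> R :=
  fun h => if excluded_middle_informative (P h) then 1 else 0.

Definition prob N alpha T rp rm eta (A : history -> Prop) : R :=
  expect N alpha T rp rm eta (indic A).

(** Increment of the current h(.,x) produced by a move, x in {-N-1,...,N}. *)
Definition curr_incr (N : nat) (x : Z) (m : move) : Z :=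
  match m with
  | HopR y => if Z.eqb y x then 1%Z else 0%Z
  | HopL y => if Z.eqb y x then (-1)%Z else 0%Z
  | Create Minus => if Z.eqb x (- Z.of_nat N - 1)%Z then 1%Z else 0%Z
  | Annih Minus => if Z.eqb x (- Z.of_nat N - 1)%Z then (-1)%Z else 0%Z
  | Annih Plus => if Z.eqb x (Z.of_nat N) then 1%Z else 0%Z
  | Create Plus => if Z.eqb x (Z.of_nat N) then (-1)%Z else 0%Z
  end.

Definition current (N : nat) (h : history) (t : R) (x : Z) : Z :=
  fold_right (fun tm acc =>
    ((if Rle_dec (fst tm) t then curr_incr N x (snd tm) else 0) + acc)%Z) 0%Z h.

Definition hN (N : nat) (alpha y0 : R) (h : history) (t : R) : R :=
  IZR (current N h t (Int_part (INR N * y0))) / Rpower (INR N) (1 + alpha).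

(** The event {sup_{0<=t<=T} |frak h_N(t)| >= L}; on paths with finitely many
    jumps, this sup is attained. *)
Definition big_current_event (N : nat) (alpha y0 T L : R) (h : history) : Prop :=
  exists t, 0 <= t <= T /\ L <= Rabs (hN N alpha y0 h t).

(* Main.v *)
Require Import Defs.
From Stdlib Require Import Reals ZArith List Lra Lia ClassicalEpsilon.
From Coquelicot Require Import Coquelicot.
Import ListNotations.
Open Scope R_scope.

Lemma RInt_nex (f : R -> R) a b : ~ ex_RInt f a b -> RInt f a b = 0.
Proof.
  intros H. unfold RInt, iota, lim. simpl. unfold R_complete_lim.
  match goal with |- context [Lub_Rbar ?S] => 
  assert (E : Lub_Rbar S = p_infty);
  [ destruct (Lub_Rbar_correct S) as [Hub _];
    destruct (Lub_Rbar S) eqn:E; auto;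
    [ exfalso; assert (Hr := Hub (r+1)); 
      assert (Rbar_le (r+1) r) by (apply Hr; intros y Hy; exfalso; apply H; exists y; exact Hy);
      simpl in *; lra
    | exfalso; assert (Hr := Hub 0); assert (Rbar_le 0 m_infty) by (apply Hr; intros y Hy; exfalso; apply H; exists y; exact Hy);
      simpl in *; auto ]
  | rewrite E; reflexivity ] end.
Qed.

Lemma RInt_nonneg_gen (f : R -> R) a b : a <= b ->
  (forall x, a < x < b -> 0 <= f x) -> 0 <= RInt f a b.
Proof.
  intros Hab Hf. destruct (excluded_middle_informative (ex_RInt f a b)) as [He|He].
  - apply RInt_ge_0; auto.
  - rewrite RInt_nex; auto; lra.
Qed.

Lemma RInt_le_gen (f g : R -> R) a b : a <= b -> ex_RInt g a b ->
  (forall x, a < x < b -> 0 <= f x <= g x) -> RInt f a b <= RInt g a b.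
Proof.
  intros Hab Hg Hf. destruct (excluded_middle_informative (ex_RInt f a b)) as [He|He].
  - apply RInt_le; auto. intros x Hx; apply Hf; auto.
  - rewrite RInt_nex; auto. apply RInt_ge_0; auto. intros x Hx. destruct (Hf x Hx); lra.
Qed.

Lemma sum_n_shift (a : nat -> R) k : sum_n a (S k) = a 0%nat + sum_n (fun j => a (S j)) k.
Proof.
  induction k.
  - rewrite sum_Sn, !sum_O. reflexivity.
  - rewrite sum_Sn, IHk, (sum_Sn (fun j => a (S j))). unfold plus; simpl. ring.
Qed.

Lemma sum_RInt_le (f : nat -> R -> R) (g : R -> R) a b k : a <= b ->
  ex_RInt g a b -> (forall j x, a < x < b -> 0 <= f j x) ->
  (forall x, a < x < b -> sum_n (fun j => f j x) k <= g x) ->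
  sum_n (fun j => RInt (f j) a b) k <= RInt g a b.
Proof.
  intros Hab. revert g. induction k; intros g Hg Hf Hs.
  - rewrite sum_O. apply RInt_le_gen; auto. intros x Hx. split; auto.
    specialize (Hs x Hx). rewrite sum_O in Hs. auto.
  - rewrite sum_Sn. unfold plus; simpl.
    destruct (excluded_middle_informative (ex_RInt (f (S k)) a b)) as [He|He].
    + assert (IH := IHk (fun x => g x - f (S k) x)).
      assert (E : RInt g a b = RInt (fun x => g x - f (S k) x) a b + RInt (f (S k)) a b).
      { assert (H1 : ex_RInt (fun x => g x - f (S k) x) a b) by (apply (ex_RInt_minus g (f (S k))); auto).
        assert (H2 := RInt_plus (fun x => g x - f (S k) x) (f (S k)) a b H1 He).
        unfold plus in H2; simpl in H2. rewrite <- H2.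
        apply RInt_ext. intros x _. simpl. lra. }
      rewrite E. apply Rplus_le_compat_r. apply IH.
      * apply (ex_RInt_minus g (f (S k))); auto.
      * auto.
      * intros x Hx. specialize (Hs x Hx). rewrite sum_Sn in Hs. unfold plus in Hs; simpl in Hs. lra.
    + rewrite (RInt_nex _ _ _ He), Rplus_0_r. apply IHk; auto.
      intros x Hx. specialize (Hs x Hx). rewrite sum_Sn in Hs. unfold plus in Hs; simpl in Hs.
      specialize (Hf (S k) x Hx). lra.
Qed.

Lemma sumR_app {A} (f : A -> R) l1 l2 : sumR f (l1 ++ l2) = sumR f l1 + sumR f l2.
Proof. induction l1; simpl; [ring| rewrite IHl1; ring]. Qed.

Lemma sumR_le_in {A} (f g : A -> R) l : (forall x, In x l -> f x <= g x) -> sumR f l <= sumR g l.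
Proof.
  induction l; simpl; intros H; [lra|].
  apply Rplus_le_compat; auto.
Qed.

Lemma sumR_lin {A} (P Q : R) (u v : A -> R) l :
  sumR (fun x => P * u x + Q * v x) l = P * sumR u l + Q * sumR v l.
Proof. induction l; simpl; [ring| rewrite IHl; ring]. Qed.

Lemma sumR_plus {A} (u v : A -> R) l :
  sumR (fun x => u x + v x) l = sumR u l + sumR v l.
Proof. induction l; simpl; [ring| rewrite IHl; ring]. Qed.

Lemma sumR_scal {A} (P : R) (u : A -> R) l :
  sumR (fun x => P * u x) l = P * sumR u l.
Proof. induction l; simpl; [ring| rewrite IHl; ring]. Qed.

Lemma sumR_ext_in {A} (f g : A -> R) l : (forall x, In x l -> f x = g x) -> sumR f l = sumR g l.
Proof. induction l; simpl; intros H; [auto| rewrite H, IHl; auto]. Qed.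

Lemma sumR_nonneg {A} (f : A -> R) l : (forall x, In x l -> 0 <= f x) -> 0 <= sumR f l.
Proof. induction l; simpl; intros H; [lra|]. assert (0 <= f a) by auto. assert (0 <= sumR f l) by auto. lra. Qed.

Lemma sumR_bound {A} (f : A -> R) l B : (forall x, In x l -> Rabs (f x) <= B) ->
  Rabs (sumR f l) <= INR (length l) * B.
Proof.
  induction l; intros H.
  - simpl. rewrite Rabs_R0; lra.
  - change (length (a :: l)) with (S (length l)). rewrite S_INR.
    change (sumR f (a :: l)) with (f a + sumR f l).
    eapply Rle_trans; [apply Rabs_triang|].
    assert (Rabs (f a) <= B) by (apply H; left; auto).
    assert (Rabs (sumR f l) <= INR (length l) * B) by (apply IHl; intros; apply H; right; auto). lra.
Qed.

Lemma sumR_le_bound {A} (f : A -> R) l B : (forall x, In x l -> f x <= B) ->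
  sumR f l <= INR (length l) * B.
Proof.
  induction l; intros H.
  - simpl. lra.
  - change (length (a :: l)) with (S (length l)). rewrite S_INR.
    change (sumR f (a :: l)) with (f a + sumR f l).
    assert (f a <= B) by (apply H; left; auto).
    assert (sumR f l <= INR (length l) * B) by (apply IHl; intros; apply H; right; auto). lra.
Qed.

Lemma sum_n_sumR {A} (c : R) (r : A -> R) (q : nat -> A -> R) l k :
  sum_n (fun j => c * sumR (fun m => r m * q j m) l) k =
  c * sumR (fun m => r m * sum_n (fun j => q j m) k) l.
Proof.
  induction k.
  - rewrite sum_O. f_equal. apply sumR_ext_in. intros; rewrite sum_O; auto.
  - rewrite sum_Sn, IHk. unfold plus; simpl.
    rewrite <- Rmult_plus_distr_l, <- sumR_plus. f_equal. apply sumR_ext_in.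
    intros x _. rewrite sum_Sn. unfold plus; simpl. ring.
Qed.

Lemma continuous_sumR {A} (f : R -> A -> R) l t :
  (forall m, continuous (fun u => f u m) t) -> continuous (fun u => sumR (f u) l) t.
Proof.
  intros H. induction l; simpl.
  - apply continuous_const.
  - apply (continuous_plus (fun u => f u a) (fun u => sumR (f u) l)); auto.
Qed.
Lemma der_cont (f : R -> R) (x l : R) : is_derive f x l -> continuous f x.
Proof. intros H. apply (ex_derive_continuous (K:=R_AbsRing) (V:=R_NormedModule)). exists l. exact H. Qed.

Lemma G_lemma (Lam Psi dPsi gs : R -> R) s T :
  s <= T -> (forall t, continuous Lam t) -> (forall t, continuous gs t) ->
  (forall t, s <= t <= T -> is_derive Psi t (dPsi t)) ->
  (forall t, s <= t <= T -> dPsi t + gs t - Lam t * Psi t <= 0) ->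
  exp (- RInt Lam s T) * Psi T + RInt (fun t => exp (- RInt Lam s t) * gs t) s T <= Psi s.
Proof.
  intros HsT HL Hg HD Hgen.
  set (I := fun t => RInt Lam s t).
  set (g := fun t => exp (- I t) * gs t).
  assert (HI : forall t, is_derive I t (Lam t)).
  { intros t. apply (is_derive_RInt Lam I s t).
    - apply filter_forall. intros b. unfold I. apply (RInt_correct (V:=R_CompleteNormedModule)). apply ex_RInt_continuous. intros; auto.
    - auto. }
  assert (HIc : forall t, continuous I t).
  { intros t. apply (der_cont I t (Lam t)). apply HI. }
  assert (Hgc : forall t, continuous g t).
  { intros t. unfold g. apply (continuous_mult (fun t => exp (- I t)) gs).
    - apply continuous_exp_comp. apply (continuous_opp I). auto.
    - auto. }
  assert (HE : forall t, is_derive (fun t => exp (- I t)) t (- Lam t * exp (- I t))).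
  { intros t. 
    assert (H := is_derive_comp exp (fun t => - I t) t (exp (- I t)) (- Lam t) (is_derive_exp _)).
    apply H. apply (is_derive_opp I). auto. }
  set (G := fun t => exp (- I t) * Psi t + RInt g s t).
  set (dG := fun t => - Lam t * exp (- I t) * Psi t + exp (- I t) * dPsi t + g t).
  assert (HG : forall t, s <= t <= T -> is_derive G t (dG t)).
  { intros t Ht. unfold G, dG.
    apply (is_derive_plus (fun t => exp (- I t) * Psi t) (fun t => RInt g s t)).
    - assert (H := is_derive_mult (fun t => exp (- I t)) Psi t _ _ (HE t) (HD t Ht)).
      eapply is_derive_ext; [| apply H]. 
      + intros; reflexivity.
      + intros; simpl; unfold mult; simpl; ring.
    - apply (is_derive_RInt g (fun t => RInt g s t) s t).
      + apply filter_forall. intros b. unfold I. apply (RInt_correct (V:=R_CompleteNormedModule)). apply ex_RInt_continuous. intros; auto.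
      + auto. }
  assert (MV := MVT_gen G s T dG).
  assert (MV' : exists c, Rmin s T <= c <= Rmax s T /\ G T - G s = dG c * (T - s)).
  { apply MV.
    - intros x Hx. rewrite Rmin_left in Hx by lra. rewrite Rmax_right in Hx by lra. apply HG; lra.
    - intros x Hx. rewrite Rmin_left in Hx by lra. rewrite Rmax_right in Hx by lra.
      apply continuity_pt_filterlim. apply (der_cont G x (dG x)). apply HG; lra. }
  clear MV. rename MV' into MV.
  rewrite Rmin_left in MV by lra. rewrite Rmax_right in MV by lra.
  destruct MV as [c [Hc Heq]].
  assert (Hd : dG c <= 0).
  { unfold dG, g. specialize (Hgen c Hc). assert (0 < exp (- I c)) by apply exp_pos.
    replace (- Lam c * exp (- I c) * Psi c + exp (- I c) * dPsi c + exp (- I c) * gs c)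
      with (exp (- I c) * (dPsi c + gs c - Lam c * Psi c)) by ring.
    apply Rmult_le_0_l; lra. }
  assert (GT : G T <= G s) by nra.
  assert (Gs : G s = Psi s).
  { unfold G, I. rewrite !RInt_point. simpl. unfold zero; simpl. rewrite Ropp_0, exp_0. ring. }
  rewrite Gs in GT. unfold G, I, g in GT. exact GT.
Qed.

Lemma Q_nonneg N alpha T rp rm F :
  (forall t xi m, 0 <= t <= T -> 0 <= rate N alpha rp rm t xi m) ->
  (forall h, 0 <= F h) ->
  forall k s xi h, 0 <= s <= T -> 0 <= Qk N alpha T rp rm F k s xi h.
Proof.
  intros Hr HF k. induction k; intros s xi h Hs.
  - simpl. apply Rmult_le_pos; [left; apply exp_pos| auto].
  - simpl. apply RInt_nonneg_gen; [lra|]. intros t Ht.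
    apply Rmult_le_pos; [left; apply exp_pos|]. apply sumR_nonneg. intros m _.
    apply Rmult_le_pos; [apply Hr; lra| apply IHk; lra].
Qed.

Lemma super_main N alpha T rp rm (F : history -> R)
  (Psi dPsi : R -> config -> history -> R) (SS : R -> config -> history -> Prop) :
  (forall t xi m, 0 <= t <= T -> 0 <= rate N alpha rp rm t xi m) ->
  (forall t xi m, continuous (fun u => rate N alpha rp rm u xi m) t) ->
  (forall h, 0 <= F h) ->
  (forall xi h, SS T xi h -> F h <= Psi T xi h) ->
  (forall t xi h, 0 <= t <= T -> SS t xi h -> 0 <= Psi t xi h) ->
  (forall s t xi h, s <= t -> SS s xi h -> SS t xi h) ->
  (forall t xi h, SS t xi h -> is_derive (fun u => Psi u xi h) t (dPsi t xi h)) ->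
  (forall xi h m t0, continuous (fun t => Psi t (apply_move N m xi) (h ++ [(t, m)])) t0) ->
  (forall t xi h, 0 <= t <= T -> SS t xi h ->
     dPsi t xi h + sumR (fun m => rate N alpha rp rm t xi m *
        (Psi t (apply_move N m xi) (h ++ [(t, m)]) - Psi t xi h)) (moves N) <= 0) ->
  (forall t xi h m, 0 <= t <= T -> SS t xi h -> In m (moves N) ->
     rate N alpha rp rm t xi m <> 0 -> SS t (apply_move N m xi) (h ++ [(t, m)])) ->
  forall k s xi h, 0 <= s <= T -> SS s xi h ->
    sum_n (fun j => Qk N alpha T rp rm F j s xi h) k <= Psi s xi h.
Proof.
  intros Hr Hrc HF HFP HPn HSm HD HPc Hgen HS k.
  assert (HQ := Q_nonneg N alpha T rp rm F Hr HF).
  set (Lam := fun xi u => total_rate N alpha rp rm u xi).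
  assert (HLc : forall xi t, continuous (Lam xi) t).
  { intros xi t. unfold Lam, total_rate. apply (continuous_sumR (fun u m => rate N alpha rp rm u xi m)).
    intros; apply Hrc. }
  set (gs := fun xi h t => sumR (fun m => rate N alpha rp rm t xi m *
        Psi t (apply_move N m xi) (h ++ [(t, m)])) (moves N)).
  assert (Hgc : forall xi h t, continuous (gs xi h) t).
  { intros xi h t. unfold gs.
    apply (continuous_sumR (fun u m => rate N alpha rp rm u xi m * Psi u (apply_move N m xi) (h ++ [(u, m)]))).
    intros m. apply (continuous_mult (fun u => rate N alpha rp rm u xi m) (fun u => Psi u (apply_move N m xi) (h ++ [(u, m)]))); auto. }
  assert (HG : forall s xi h, 0 <= s <= T -> SS s xi h ->
    exp (- RInt (Lam xi) s T) * Psi T xi h + RInt (fun t => exp (- RInt (Lam xi) s t) * gs xi h t) s T <= Psi s xi h).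
  { intros s xi h Hs HSs. apply (G_lemma (Lam xi) (fun u => Psi u xi h) (fun u => dPsi u xi h) (gs xi h) s T).
    - lra.
    - auto.
    - auto.
    - intros t Ht. apply HD. apply (HSm s); [lra|auto].
    - intros t Ht. assert (Hg := Hgen t xi h ltac:(lra) (HSm s t xi h ltac:(lra) HSs)).
      unfold gs, Lam, total_rate.
      replace (sumR (fun m => rate N alpha rp rm t xi m * (Psi t (apply_move N m xi) (h ++ [(t, m)]) - Psi t xi h)) (moves N))
        with (sumR (fun m => rate N alpha rp rm t xi m * Psi t (apply_move N m xi) (h ++ [(t, m)])) (moves N)
              - sumR (rate N alpha rp rm t xi) (moves N) * Psi t xi h) in Hg.
      + lra.
      + clear. induction (moves N); simpl; [ring|]. rewrite <- IHl. ring. }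
  induction k; intros s xi h Hs HSs.
  - rewrite sum_O. simpl. specialize (HG s xi h Hs HSs).
    assert (0 <= RInt (fun t => exp (- RInt (Lam xi) s t) * gs xi h t) s T).
    { apply RInt_nonneg_gen; [lra|]. intros t Ht. apply Rmult_le_pos; [left; apply exp_pos|].
      unfold gs. apply sumR_nonneg. intros m Hm.
      destruct (Req_dec (rate N alpha rp rm t xi m) 0) as [E|E].
      - rewrite E; lra.
      - apply Rmult_le_pos; [apply Hr; lra|]. apply HPn; [lra|]. apply HS; auto; [lra|]. apply (HSm s); [lra|auto]. }
    assert (F h <= Psi T xi h) by (apply HFP; apply (HSm s); [lra|auto]).
    assert (0 < exp (- RInt (fun u => total_rate N alpha rp rm u xi) s T)) by apply exp_pos.
    fold (Lam xi). 
    assert (exp (- RInt (Lam xi) s T) * F h <= exp (- RInt (Lam xi) s T) * Psi T xi h) by (apply Rmult_le_compat_l; [left; auto| auto]).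
    lra.
  - rewrite sum_n_shift. specialize (HG s xi h Hs HSs).
    assert (E0 : Qk N alpha T rp rm F 0 s xi h = exp (- RInt (Lam xi) s T) * F h) by reflexivity.
    rewrite E0.
    assert (HFh : F h <= Psi T xi h) by (apply HFP; apply (HSm s); [lra|auto]).
    assert (exp (- RInt (Lam xi) s T) * F h <= exp (- RInt (Lam xi) s T) * Psi T xi h) by (apply Rmult_le_compat_l; [left; apply exp_pos| auto]).
    assert (Hsum : sum_n (fun j => Qk N alpha T rp rm F (S j) s xi h) k <=
                   RInt (fun t => exp (- RInt (Lam xi) s t) * gs xi h t) s T).
    { change (sum_n (fun j => RInt (fun t => exp (- RInt (Lam xi) s t) *
         sumR (fun m => rate N alpha rp rm t xi m * Qk N alpha T rp rm F j t (apply_move N m xi) (h ++ [(t, m)])) (moves N)) s T) k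
         <= RInt (fun t => exp (- RInt (Lam xi) s t) * gs xi h t) s T).
      apply (sum_RInt_le (fun j t => exp (- RInt (Lam xi) s t) *
         sumR (fun m => rate N alpha rp rm t xi m * Qk N alpha T rp rm F j t (apply_move N m xi) (h ++ [(t, m)])) (moves N))).
      - lra.
      - apply (ex_RInt_continuous (V:=R_CompleteNormedModule)). intros z _.
        apply (continuous_mult (fun t => exp (- RInt (Lam xi) s t)) (gs xi h)); [|auto].
        apply continuous_exp_comp. apply (continuous_opp (fun t => RInt (Lam xi) s t)).
        apply (der_cont (fun t => RInt (Lam xi) s t) z (Lam xi z)).
        apply (is_derive_RInt (Lam xi) (fun t => RInt (Lam xi) s t) s z).
        + apply filter_forall. intros b. apply (RInt_correct (V:=R_CompleteNormedModule)). apply ex_RInt_continuous. intros; auto.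
        + auto.
      - intros j t Ht. apply Rmult_le_pos; [left; apply exp_pos|]. apply sumR_nonneg. intros m _.
        apply Rmult_le_pos; [apply Hr; lra| apply HQ; lra].
      - intros t Ht. rewrite (sum_n_sumR (exp (- RInt (Lam xi) s t)) (rate N alpha rp rm t xi)
            (fun j m => Qk N alpha T rp rm F j t (apply_move N m xi) (h ++ [(t, m)]))).
        apply Rmult_le_compat_l; [left; apply exp_pos|]. unfold gs. apply sumR_le_in. intros m Hm.
        destruct (Req_dec (rate N alpha rp rm t xi m) 0) as [E|E].
        + rewrite E; lra.
        + apply Rmult_le_compat_l; [apply Hr; lra|]. apply IHk; [lra|]. apply HS; auto; [lra|]. apply (HSm s); [lra|auto]. }
    lra.
Qed.

Fixpoint zrange (a : Z) (n : nat) : list Z :=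
  match n with O => [] | S n => a :: zrange (a + 1)%Z n end.

Definition Xs (N : nat) : list Z := zrange (- Z.of_nat N - 1)%Z (2 * N + 2).

Definition curM (N : nat) (ms : list move) (x : Z) : Z :=
  fold_right (fun m acc => (curr_incr N x m + acc)%Z) 0%Z ms.

Definition dm (m : move) : R :=
  match m with
  | HopR _ => 1 | HopL _ => -1
  | Create Minus => 1 | Annih Minus => -1
  | Annih Plus => 1 | Create Plus => -1
  end.

Definition AsM (ms : list move) : R := sumR dm ms.

Definition bZ (b : bool) : Z := if b then 1%Z else 0%Z.

Definition Inv (N : nat) (eta0 xi : config) (ms : list move) : Prop :=
  (forall x, (- Z.of_nat N <= x <= Z.of_nat N)%Z ->
     (curM N ms (x - 1) - curM N ms x = bZ (xi x) - bZ (eta0 x))%Z) /\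
  sumR (fun x => IZR (curM N ms x)) (Xs N) = AsM ms.

Lemma zrange_length a n : length (zrange a n) = n.
Proof. revert a; induction n; simpl; auto. Qed.

Lemma zrange_in a n x : In x (zrange a n) -> (a <= x < a + Z.of_nat n)%Z.
Proof. revert a; induction n; simpl; intros a H; [contradiction|].
  destruct H as [H|H]; [subst; lia|]. apply IHn in H. lia. Qed.

Lemma map_seq_zrange a k n :
  map (fun i => (a + Z.of_nat i)%Z) (seq k n) = zrange (a + Z.of_nat k)%Z n.
Proof. revert k; induction n; intros k; simpl; auto. rewrite IHn. f_equal. f_equal. lia. Qed.

Lemma sum_ind0 a n y v : (y < a \/ a + Z.of_nat n <= y)%Z ->
  sumR (fun x => if Z.eqb x y then v else 0) (zrange a n) = 0.
Proof. revert a; induction n; intros a H; simpl; auto.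
  rewrite IHn by lia. destruct (Z.eqb_spec a y); [lia| ring]. Qed.

Lemma sum_ind a n y v : (a <= y < a + Z.of_nat n)%Z ->
  sumR (fun x => if Z.eqb x y then v else 0) (zrange a n) = v.
Proof. revert a; induction n; intros a H; simpl; [lia|].
  destruct (Z.eqb_spec a y).
  - rewrite sum_ind0 by lia. ring.
  - rewrite IHn by lia. ring. Qed.

Lemma curM_app N ms m x : curM N (ms ++ [m]) x = (curM N ms x + curr_incr N x m)%Z.
Proof. induction ms; simpl; [lia|]. unfold curM in *; simpl. rewrite IHms. lia. Qed.

Lemma AsM_app ms m : AsM (ms ++ [m]) = AsM ms + dm m.
Proof. unfold AsM. rewrite sumR_app. simpl. ring. Qed.

Lemma in_moves N m : In m (moves N) ->
  (exists y, (- Z.of_nat N <= y < Z.of_nat N)%Z /\ (m = HopR y \/ m = HopL y)) \/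
  m = Create Plus \/ m = Create Minus \/ m = Annih Plus \/ m = Annih Minus.
Proof.
  unfold moves. intros H. apply in_app_or in H. destruct H as [H|H].
  - left. apply in_flat_map in H. destruct H as [y [Hy Hm]].
    unfold bonds in Hy. apply in_map_iff in Hy. destruct Hy as [i [Ei Hi]]. apply in_seq in Hi.
    exists y. split; [lia|]. simpl in Hm. destruct Hm as [E|[E|E]]; auto; contradiction.
  - right. simpl in H. destruct H as [E|[E|[E|[E|[]]]]]; subst; tauto.
Qed.

Lemma sum_incr N m : In m (moves N) ->
  sumR (fun x => IZR (curr_incr N x m)) (Xs N) = dm m.
Proof.
  intros Hm. unfold Xs.
  destruct (in_moves N m Hm) as [[y [Hy [E|E]]]|[E|[E|[E|E]]]]; subst m; simpl dm.
  - rewrite (sumR_ext_in _ (fun x => if Z.eqb x y then 1 else 0)).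
    + apply sum_ind. lia.
    + intros x _. simpl. destruct (Z.eqb_spec y x), (Z.eqb_spec x y); subst; try lia; reflexivity.
  - rewrite (sumR_ext_in _ (fun x => if Z.eqb x y then -1 else 0)).
    + apply sum_ind. lia.
    + intros x _. simpl. destruct (Z.eqb_spec y x), (Z.eqb_spec x y); subst; try lia; reflexivity.
  - rewrite (sumR_ext_in _ (fun x => if Z.eqb x (Z.of_nat N) then -1 else 0)).
    + apply sum_ind. lia.
    + intros x _. simpl. destruct (Z.eqb_spec x (Z.of_nat N)); reflexivity.
  - rewrite (sumR_ext_in _ (fun x => if Z.eqb x (- Z.of_nat N - 1) then 1 else 0)).
    + apply sum_ind. lia.
    + intros x _. simpl. destruct (Z.eqb_spec x (- Z.of_nat N - 1)); reflexivity.
  - rewrite (sumR_ext_in _ (fun x => if Z.eqb x (Z.of_nat N) then 1 else 0)).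
    + apply sum_ind. lia.
    + intros x _. simpl. destruct (Z.eqb_spec x (Z.of_nat N)); reflexivity.
  - rewrite (sumR_ext_in _ (fun x => if Z.eqb x (- Z.of_nat N - 1) then -1 else 0)).
    + apply sum_ind. lia.
    + intros x _. simpl. destruct (Z.eqb_spec x (- Z.of_nat N - 1)); reflexivity.
Qed.

Ltac inv_case x eta0 E1 E2 :=
  unfold apply_move, setc, curr_incr, side_site in *;
  repeat match goal with |- context [Z.eqb ?a ?b] => destruct (Z.eqb_spec a b) end;
  destruct (eta0 x); try subst x;
  try rewrite E1 in *; try rewrite E2 in *;
  cbn [bZ] in *; lia.

Lemma Inv_step N alpha rp rm t eta0 xi ms m : Inv N eta0 xi ms -> In m (moves N) ->
  rate N alpha rp rm t xi m <> 0 -> Inv N eta0 (apply_move N m xi) (ms ++ [m]).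
Proof.
  intros [H1 H2] Hm Hr. split.
  - intros x Hx. rewrite !curM_app. specialize (H1 x Hx).
    destruct (in_moves N m Hm) as [[y [Hy [E|E]]]|[E|[E|[E|E]]]]; subst m;
      unfold rate in Hr; simpl in Hr.
    + destruct (xi y) eqn:E1, (xi (y+1)%Z) eqn:E2; simpl in Hr; try (exfalso; apply Hr; reflexivity).
      inv_case x eta0 E1 E2.
    + destruct (xi y) eqn:E1, (xi (y+1)%Z) eqn:E2; simpl in Hr; try (exfalso; apply Hr; reflexivity).
      inv_case x eta0 E1 E2.
    + destruct (xi (Z.of_nat N)) eqn:E1; simpl in Hr; try (exfalso; apply Hr; reflexivity).
      inv_case x eta0 E1 E1.
    + destruct (xi (- Z.of_nat N)%Z) eqn:E1; simpl in Hr; try (exfalso; apply Hr; reflexivity).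
      inv_case x eta0 E1 E1.
    + destruct (xi (Z.of_nat N)) eqn:E1; simpl in Hr; try (exfalso; apply Hr; reflexivity).
      inv_case x eta0 E1 E1.
    + destruct (xi (- Z.of_nat N)%Z) eqn:E1; simpl in Hr; try (exfalso; apply Hr; reflexivity).
      inv_case x eta0 E1 E1.
  - rewrite (sumR_ext_in _ (fun x => IZR (curM N ms x) + IZR (curr_incr N x m))).
    + rewrite sumR_plus, H2, sum_incr by auto. rewrite AsM_app. ring.
    + intros x _. rewrite curM_app, plus_IZR. ring.
Qed.

Lemma sumR_const_minus {A} (a : R) (g : A -> R) l :
  sumR (fun x => a - g x) l = INR (length l) * a - sumR g l.
Proof. induction l.
  - simpl. ring.
  - change (length (a0 :: l)) with (S (length l)). rewrite S_INR. simpl. rewrite IHl. ring. Qed.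

Lemma Xs_len N : INR (length (Xs N)) = 2 * INR N + 2.
Proof. unfold Xs. rewrite zrange_length. rewrite plus_INR, mult_INR. simpl. ring. Qed.

Lemma Inv_lip N eta0 xi ms : Inv N eta0 xi ms ->
  forall d : nat, forall u, (- Z.of_nat N - 1 <= u)%Z -> (u + Z.of_nat d <= Z.of_nat N)%Z ->
  (Z.abs (curM N ms u - curM N ms (u + Z.of_nat d)) <= Z.of_nat d)%Z.
Proof.
  intros [H1 _] d. induction d; intros u Hu Hd.
  - simpl. rewrite Z.add_0_r, Z.sub_diag. simpl. lia.
  - specialize (IHd u Hu ltac:(lia)).
    specialize (H1 (u + Z.of_nat (S d))%Z ltac:(lia)).
    replace (u + Z.of_nat (S d) - 1)%Z with (u + Z.of_nat d)%Z in H1 by lia.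
    destruct (xi (u + Z.of_nat (S d))%Z), (eta0 (u + Z.of_nat (S d))%Z); cbn [bZ] in H1; lia.
Qed.

Lemma Inv_close N eta0 xi ms x0 : Inv N eta0 xi ms -> (- Z.of_nat N <= x0 <= Z.of_nat N)%Z ->
  Rabs (IZR (curM N ms x0) - AsM ms / (2 * INR N + 2)) <= 2 * INR N + 1.
Proof.
  intros HI Hx0.
  assert (Hl : forall x, In x (Xs N) -> Rabs (IZR (curM N ms x0) - IZR (curM N ms x)) <= 2 * INR N + 1).
  { intros x Hx. unfold Xs in Hx. apply zrange_in in Hx.
    assert (Hz : (Z.abs (curM N ms x0 - curM N ms x) <= 2 * Z.of_nat N + 1)%Z).
    { destruct (Z.le_ge_cases x0 x) as [Hc|Hc].
      - assert (H := Inv_lip N eta0 xi ms HI (Z.to_nat (x - x0)) x0 ltac:(lia) ltac:(lia)).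
        rewrite Z2Nat.id in H by lia. replace (x0 + (x - x0))%Z with x in H by lia. lia.
      - assert (H := Inv_lip N eta0 xi ms HI (Z.to_nat (x0 - x)) x ltac:(lia) ltac:(lia)).
        rewrite Z2Nat.id in H by lia. replace (x + (x0 - x))%Z with x0 in H by lia. lia. }
    rewrite <- minus_IZR, Rabs_Zabs. apply IZR_le in Hz.
    rewrite plus_IZR, mult_IZR, <- INR_IZR_INZ in Hz. simpl in Hz. lra. }
  assert (HB := sumR_bound _ _ _ Hl).
  rewrite sumR_const_minus, Xs_len in HB. destruct HI as [_ H2]. rewrite H2 in HB.
  assert (HK : 0 < 2 * INR N + 2) by (assert (0 <= INR N) by (apply pos_INR); lra).
  replace (IZR (curM N ms x0) - AsM ms / (2 * INR N + 2)) with
    (((2 * INR N + 2) * IZR (curM N ms x0) - AsM ms) / (2 * INR N + 2)) by (field; lra).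
  unfold Rdiv. rewrite Rabs_mult, Rabs_inv, (Rabs_pos_eq (2 * INR N + 2)) by lra.
  apply (Rmult_le_reg_r (2 * INR N + 2)); [lra|].
  rewrite Rmult_assoc, Rinv_l by lra. lra.
Qed.

Definition bR (b : bool) : R := if b then 1 else 0.

Lemma sumR_flat_map {A B} (g : B -> R) (f : A -> list B) l :
  sumR g (flat_map f l) = sumR (fun x => sumR g (f x)) l.
Proof. induction l; simpl; auto. rewrite sumR_app, IHl. reflexivity. Qed.

Lemma telescope (c0 : R) (xi : config) a n :
  sumR (fun x => c0 * (bR (xi x) - bR (xi (x + 1)%Z))) (zrange a n) =
  c0 * (bR (xi a) - bR (xi (a + Z.of_nat n)%Z)).
Proof. revert a; induction n; intros a; simpl.
  - rewrite Z.add_0_r. ring.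
  - rewrite IHn. replace (a + 1 + Z.of_nat n)%Z with (a + Z.pos (Pos.of_succ_nat n))%Z by lia. ring.
Qed.

Lemma bonds_zrange N : bonds N = zrange (- Z.of_nat N) (2 * N).
Proof. unfold bonds. rewrite map_seq_zrange. f_equal. lia. Qed.

Lemma moves_length N : length (moves N) = (4 * N + 4)%nat.
Proof.
  unfold moves. rewrite length_app. rewrite bonds_zrange.
  assert (forall a n, length (flat_map (fun x => [HopR x; HopL x]) (zrange a n)) = (2 * n)%nat).
  { intros a n; revert a; induction n; intros a; simpl; auto. rewrite IHn. lia. }
  rewrite H. simpl. lia.
Qed.

Lemma drift N alpha rp rm t xi :
  0 <= rp t <= 1 -> 0 <= rm t <= 1 ->
  Rabs (sumR (fun m => rate N alpha rp rm t xi m * dm m) (moves N)) <= Rpower (INR N) (2 + alpha).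
Proof.
  intros Hp Hm. set (c0 := Rpower (INR N) (2 + alpha)).
  assert (Hc0 : 0 < c0) by (unfold c0, Rpower; apply exp_pos).
  unfold moves. rewrite sumR_app, sumR_flat_map, bonds_zrange.
  rewrite (sumR_ext_in _ (fun x => c0 * (bR (xi x) - bR (xi (x + 1)%Z)))).
  - rewrite telescope. replace (- Z.of_nat N + Z.of_nat (2 * N))%Z with (Z.of_nat N) by lia.
    simpl. fold c0. unfold bR.
    destruct (xi (Z.of_nat N)), (xi (- Z.of_nat N)%Z); apply Rabs_le; split; nra.
  - intros x _. simpl. fold c0. unfold bR.
    destruct (xi x), (xi (x + 1)%Z); simpl; ring.
Qed.

Lemma rate_bounds N alpha rp rm t xi m : 0 <= rp t <= 1 -> 0 <= rm t <= 1 ->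
  0 <= rate N alpha rp rm t xi m <= Rpower (INR N) (2 + alpha).
Proof.
  intros Hp Hm. assert (Hc0 : 0 < Rpower (INR N) (2 + alpha)) by (unfold Rpower; apply exp_pos).
  destruct m as [x|x|[]|[]]; simpl;
  repeat match goal with |- context [if ?b then _ else _] => destruct b end; split; nra.
Qed.

Lemma rate_cont N alpha rp rm xi m t : (forall u, continuous rp u) -> (forall u, continuous rm u) ->
  continuous (fun u => rate N alpha rp rm u xi m) t.
Proof.
  intros Hp Hm. set (c0 := Rpower (INR N) (2 + alpha)).
  destruct m as [x|x|[]|[]]; simpl; fold c0;
  repeat match goal with |- context [if ?b then _ else _] => destruct b end;
  try apply continuous_const.
  - apply (continuous_mult (fun _ => c0) rp); [apply continuous_const| auto].
  - apply (continuous_mult (fun _ => c0) rm); [apply continuous_const| auto].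
  - apply (continuous_mult (fun _ => c0) (fun u => 1 - rp u)); [apply continuous_const|].
    apply (continuous_minus (fun _ => 1) rp); [apply continuous_const| auto].
  - apply (continuous_mult (fun _ => c0) (fun u => 1 - rm u)); [apply continuous_const|].
    apply (continuous_minus (fun _ => 1) rm); [apply continuous_const| auto].
Qed.

Lemma exp_quad y : Rabs y <= 1/2 -> exp y <= 1 + y + 2 * y ^ 2.
Proof.
  intros Hy. apply Rabs_le_between in Hy.
  assert (H1 := exp_ineq1_le (- y)).
  assert (H2 : exp y * exp (- y) = 1) by (rewrite <- exp_plus; replace (y + - y) with 0 by ring; apply exp_0).
  assert (0 < exp y) by apply exp_pos.
  assert (exp y * (1 - y) <= 1) by nra.
  assert (1 <= (1 + y + 2 * y ^ 2) * (1 - y)) by nra.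
  nra.
Qed.

Definition hitm N x0 Lvl (ms : list move) : Prop :=
  exists n, Lvl <= Rabs (IZR (curM N (firstn n ms) x0)).

Definition PhiF (c T Lv K t : R) (ms : list move) : R :=
  exp (c * (T - t)) * (exp (AsM ms / K) + exp (- (AsM ms / K))) * exp (- Lv).

Definition PsiM N x0 Lvl c T Lv K t ms : R :=
  if excluded_middle_informative (hitm N x0 Lvl ms) then 1 else PhiF c T Lv K t ms.

Definition dPsiM N x0 Lvl c T Lv K t ms : R :=
  if excluded_middle_informative (hitm N x0 Lvl ms) then 0 else - c * PhiF c T Lv K t ms.

Lemma hit_mono N x0 Lvl ms m : hitm N x0 Lvl ms -> hitm N x0 Lvl (ms ++ [m]).
Proof.
  intros [n Hn]. destruct (le_lt_dec n (length ms)).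
  - exists n. rewrite firstn_app. replace (n - length ms)%nat with 0%nat by lia. simpl. rewrite app_nil_r. auto.
  - exists (length ms). rewrite firstn_app, Nat.sub_diag, firstn_all. simpl. rewrite app_nil_r.
    rewrite firstn_all2 in Hn by lia. auto.
Qed.

Lemma hit_new N x0 Lvl ms m : ~ hitm N x0 Lvl ms -> hitm N x0 Lvl (ms ++ [m]) ->
  Lvl <= Rabs (IZR (curM N (ms ++ [m]) x0)).
Proof.
  intros Hn [n Hh]. destruct (le_lt_dec n (length ms)).
  - exfalso. apply Hn. exists n. rewrite firstn_app in Hh. replace (n - length ms)%nat with 0%nat in Hh by lia.
    simpl in Hh. rewrite app_nil_r in Hh. auto.
  - rewrite firstn_all2 in Hh; auto. rewrite length_app. simpl. lia.
Qed.

Lemma Phi_ge1 N eta0 xi ms x0 Lvl c T t : Inv N eta0 xi ms -> (- Z.of_nat N <= x0 <= Z.of_nat N)%Z ->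
  0 <= c -> t <= T -> Lvl <= Rabs (IZR (curM N ms x0)) ->
  1 <= PhiF c T (Lvl - (2 * INR N + 1)) (2 * INR N + 2) t ms.
Proof.
  intros HI Hx Hc Ht HL. assert (Hcl := Inv_close N eta0 xi ms x0 HI Hx).
  set (A := AsM ms / (2 * INR N + 2)) in *.
  assert (HA : Lvl - (2 * INR N + 1) <= Rabs A).
  { assert (Rabs (IZR (curM N ms x0)) <= Rabs (IZR (curM N ms x0) - A) + Rabs A).
    { replace (IZR (curM N ms x0)) with ((IZR (curM N ms x0) - A) + A) at 1 by ring. apply Rabs_triang. }
    lra. }
  unfold PhiF. fold A.
  assert (E1 : 1 <= exp (c * (T - t))).
  { rewrite <- exp_0. destruct (Req_dec (c * (T - t)) 0) as [E|E].
    - rewrite E. lra.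
    - left. apply exp_increasing. assert (0 <= c * (T - t)) by nra. lra. }
  assert (E2 : exp (Rabs A) <= exp A + exp (- A)).
  { destruct (Rle_dec 0 A).
    - rewrite Rabs_pos_eq by lra. assert (0 < exp (- A)) by apply exp_pos. lra.
    - rewrite Rabs_left by lra. assert (0 < exp A) by apply exp_pos. lra. }
  assert (E3 : exp (Lvl - (2 * INR N + 1)) <= exp (Rabs A)).
  { destruct (Req_dec (Lvl - (2 * INR N + 1)) (Rabs A)) as [E|E].
    - rewrite E; lra.
    - left; apply exp_increasing; lra. }
  assert (E4 : exp (Lvl - (2 * INR N + 1)) * exp (- (Lvl - (2 * INR N + 1))) = 1).
  { rewrite <- exp_plus. replace (Lvl - (2 * INR N + 1) + - (Lvl - (2 * INR N + 1))) with 0 by ring. apply exp_0. }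
  assert (0 < exp (- (Lvl - (2 * INR N + 1)))) by apply exp_pos.
  assert (0 < exp (Lvl - (2 * INR N + 1))) by apply exp_pos.
  assert (1 <= (exp A + exp (- A)) * exp (- (Lvl - (2 * INR N + 1)))) by nra.
  assert (0 <= (exp A + exp (- A)) * exp (- (Lvl - (2 * INR N + 1)))) by lra.
  nra.
Qed.





Lemma dm_sq m : dm m * dm m = 1.
Proof. destruct m as [x|x|[]|[]]; simpl; ring. Qed.

Lemma expsum N alpha rp rm t xi s : 0 <= rp t <= 1 -> 0 <= rm t <= 1 -> s * s = 1 ->
  sumR (fun m => rate N alpha rp rm t xi m * (exp (s * (dm m / (2 * INR N + 2))) - 1)) (moves N)
  <= 5 * Rpower (INR N) (2 + alpha) / (2 * INR N + 2).
Proof.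
  intros Hp Hm Hs. set (K := 2 * INR N + 2). set (c0 := Rpower (INR N) (2 + alpha)).
  assert (HN : 0 <= INR N) by apply pos_INR.
  assert (HK : 2 <= K) by (unfold K; lra).
  assert (Hc0 : 0 < c0) by (unfold c0, Rpower; apply exp_pos).
  assert (Hs1 : Rabs s = 1).
  { assert (Rabs s * Rabs s = 1) by (rewrite <- Rabs_mult, Hs; apply Rabs_R1).
    assert (0 <= Rabs s) by apply Rabs_pos. nra. }
  eapply Rle_trans.
  { apply (sumR_le_in _ (fun m => (s / K) * (rate N alpha rp rm t xi m * dm m) + (2 / (K * K)) * rate N alpha rp rm t xi m)).
    intros m _. destruct (rate_bounds N alpha rp rm t xi m Hp Hm) as [Hr0 _]. fold c0 in Hr0.
    assert (Hy : Rabs (s * (dm m / K)) <= 1/2).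
    { rewrite Rabs_mult, Hs1, Rmult_1_l. unfold Rdiv. rewrite Rabs_mult.
      assert (Rabs (dm m) = 1) by (destruct m as [x|x|[]|[]]; simpl; unfold Rabs; destruct Rcase_abs; lra).
      rewrite H, Rmult_1_l. rewrite Rabs_inv, Rabs_pos_eq by lra.
      apply (Rmult_le_reg_r K); [lra|]. rewrite Rinv_l by lra. lra. }
    assert (He := exp_quad _ Hy).
    assert (Hsq : (s * (dm m / K)) ^ 2 = 1 / (K * K)).
    { replace ((s * (dm m / K)) ^ 2) with ((s * s) * (dm m * dm m) / (K * K)) by (field; lra).
      rewrite Hs, dm_sq. field. lra. }
    rewrite Hsq in He.
    assert (rate N alpha rp rm t xi m * (exp (s * (dm m / K)) - 1) <=
            rate N alpha rp rm t xi m * (s * (dm m / K) + 2 * (1 / (K * K)))) by (apply Rmult_le_compat_l; lra).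
    eapply Rle_trans; [exact H|]. right. field. lra. }
  rewrite sumR_lin.
  assert (Hd := drift N alpha rp rm t xi Hp Hm). fold c0 in Hd.
  assert (Hsum : sumR (rate N alpha rp rm t xi) (moves N) <= INR (length (moves N)) * c0).
  { apply sumR_le_bound. intros m _. destruct (rate_bounds N alpha rp rm t xi m Hp Hm). auto. }
  rewrite moves_length in Hsum.
  assert (E : INR (4 * N + 4) = 2 * K) by (unfold K; rewrite plus_INR, mult_INR; simpl; ring).
  rewrite E in Hsum.
  assert (H1 : s / K * sumR (fun m => rate N alpha rp rm t xi m * dm m) (moves N) <= c0 / K).
  { set (X := sumR (fun m => rate N alpha rp rm t xi m * dm m) (moves N)) in *.
    assert (s / K * X <= Rabs (s / K * X)) by apply RRle_abs.
    rewrite Rabs_mult in H. unfold Rdiv in H. rewrite Rabs_mult, Hs1, Rabs_inv, (Rabs_pos_eq K) in H by lra.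
    assert (0 < / K) by (apply Rinv_0_lt_compat; lra).
    unfold Rdiv. nra. }
  assert (H2 : 2 / (K * K) * sumR (rate N alpha rp rm t xi) (moves N) <= 4 * c0 / K).
  { assert (0 < 2 / (K * K)) by (apply Rdiv_lt_0_compat; nra).
    apply Rle_trans with (2 / (K * K) * (2 * K * c0)).
    - apply Rmult_le_compat_l; lra.
    - right. field. lra. }
  replace (5 * c0 / K) with (c0 / K + 4 * c0 / K) by (field; lra). lra.
Qed.

Lemma sumR_zero {A} (l : list A) : sumR (fun _ => 0) l = 0.
Proof. induction l; simpl; auto. rewrite IHl. ring. Qed.

Lemma gen_specific N alpha rp rm t T xi eta0 ms x0 Lvl :
  0 <= rp t <= 1 -> 0 <= rm t <= 1 -> t <= T ->
  Inv N eta0 xi ms -> (- Z.of_nat N <= x0 <= Z.of_nat N)%Z ->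
  let K := 2 * INR N + 2 in
  let c := 5 * Rpower (INR N) (2 + alpha) / K in
  let Lv := Lvl - (2 * INR N + 1) in
  dPsiM N x0 Lvl c T Lv K t ms +
  sumR (fun m => rate N alpha rp rm t xi m *
     (PsiM N x0 Lvl c T Lv K t (ms ++ [m]) - PsiM N x0 Lvl c T Lv K t ms)) (moves N) <= 0.
Proof.
  intros Hp Hm Ht HI Hx0 K c Lv.
  assert (HN : 0 <= INR N) by apply pos_INR.
  assert (Hc0 : 0 < Rpower (INR N) (2 + alpha)) by (unfold Rpower; apply exp_pos).
  assert (Hc : 0 <= c) by (unfold c, K; apply Rlt_le, Rdiv_lt_0_compat; lra).
  unfold dPsiM, PsiM at 2.
  destruct (excluded_middle_informative (hitm N x0 Lvl ms)) as [Hh|Hh].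
  - rewrite (sumR_ext_in _ (fun _ => 0)); [rewrite sumR_zero; lra|].
    intros m _. unfold PsiM. destruct (excluded_middle_informative (hitm N x0 Lvl (ms ++ [m]))) as [_|Hn].
    + ring.
    + exfalso. apply Hn. apply hit_mono; auto.
  - set (Phi := PhiF c T Lv K t ms).
    set (A := AsM ms / K).
    set (P := exp (c * (T - t)) * exp A * exp (- Lv)).
    set (Q := exp (c * (T - t)) * exp (- A) * exp (- Lv)).
    assert (HPhi : Phi = P + Q) by (unfold Phi, PhiF, P, Q, A; ring).
    eapply Rle_trans.
    { apply Rplus_le_compat_l.
      apply (sumR_le_in _ (fun m => P * (rate N alpha rp rm t xi m * (exp (1 * (dm m / K)) - 1)) +
                                  Q * (rate N alpha rp rm t xi m * (exp (-1 * (dm m / K)) - 1)))).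
      intros m Hmm.
      destruct (rate_bounds N alpha rp rm t xi m Hp Hm) as [Hr0 _].
      assert (Eid : P * (rate N alpha rp rm t xi m * (exp (1 * (dm m / K)) - 1)) +
                    Q * (rate N alpha rp rm t xi m * (exp (-1 * (dm m / K)) - 1)) =
                    rate N alpha rp rm t xi m * (PhiF c T Lv K t (ms ++ [m]) - Phi)).
      { unfold PhiF, Phi, PhiF, P, Q, A. rewrite AsM_app.
        replace ((AsM ms + dm m) / K) with (AsM ms / K + 1 * (dm m / K)) by (unfold K; field; lra).
        replace (- (AsM ms / K + 1 * (dm m / K))) with (- (AsM ms / K) + -1 * (dm m / K)) by ring.
        rewrite !exp_plus. ring. }
      rewrite Eid. destruct (Req_dec (rate N alpha rp rm t xi m) 0) as [E0|E0].
      { rewrite E0, !Rmult_0_l. lra. }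
      apply Rmult_le_compat_l; auto. apply Rplus_le_compat_r.
      unfold PsiM. destruct (excluded_middle_informative (hitm N x0 Lvl (ms ++ [m]))) as [Hh'|Hh'].
      - apply (Phi_ge1 N eta0 (apply_move N m xi) (ms ++ [m]) x0 Lvl c T t); auto.
        * apply (Inv_step N alpha rp rm t eta0 xi ms m); auto.
        * apply hit_new; auto.
      - lra. }
    rewrite sumR_lin.
    assert (H1 := expsum N alpha rp rm t xi 1 Hp Hm ltac:(ring)).
    assert (H2 := expsum N alpha rp rm t xi (-1) Hp Hm ltac:(ring)).
    fold K in H1, H2. fold c in H1, H2.
    assert (0 <= P) by (unfold P; repeat apply Rmult_le_pos; left; apply exp_pos).
    assert (0 <= Q) by (unfold Q; repeat apply Rmult_le_pos; left; apply exp_pos).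
    assert (P * sumR (fun m => rate N alpha rp rm t xi m * (exp (1 * (dm m / K)) - 1)) (moves N) <= P * c)
      by (apply Rmult_le_compat_l; auto).
    assert (Q * sumR (fun m => rate N alpha rp rm t xi m * (exp (-1 * (dm m / K)) - 1)) (moves N) <= Q * c)
      by (apply Rmult_le_compat_l; auto).
    fold Phi. rewrite HPhi. nra.
Qed.

Fixpoint sortedh (h : history) : Prop :=
  match h with [] => True | p :: r => (forall q, In q r -> fst p <= fst q) /\ sortedh r end.

Lemma sortedh_app h t m : sortedh h -> (forall q, In q h -> fst q <= t) -> sortedh (h ++ [(t, m)]).
Proof.
  induction h as [|p r IH]; simpl; intros Hs Hq.
  { split; [intros q []|auto]. }
  destruct Hs as [H1 H2]. split.
  - intros q Hq'. apply in_app_or in Hq'. destruct Hq' as [Hq'|Hq'].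
    + auto.
    + simpl in Hq'. destruct Hq' as [E|[]]. subst q. simpl. apply Hq. left; auto.
  - apply IH; auto.
Qed.

Lemma current_zero N h t x : (forall q, In q h -> t < fst q) -> current N h t x = 0%Z.
Proof.
  induction h as [|p r IH]; simpl; intros H; auto.
  destruct (Rle_dec (fst p) t) as [Hl|Hl].
  - exfalso. assert (t < fst p) by (apply H; left; auto). lra.
  - rewrite IH; auto.
Qed.

Lemma current_prefix N h t x : sortedh h -> exists n, current N h t x = curM N (firstn n (map snd h)) x.
Proof.
  induction h as [|p r IH]; simpl; intros Hs.
  - exists 0%nat. reflexivity.
  - destruct Hs as [H1 H2]. destruct (IH H2) as [n Hn].
    destruct (Rle_dec (fst p) t) as [Hl|Hl].
    + exists (S n). simpl. unfold current in *. simpl. rewrite Hn. reflexivity.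
    + exists 0%nat. simpl. rewrite current_zero; [reflexivity|].
      intros q Hq. assert (fst p <= fst q) by auto. lra.
Qed.

Lemma Series_le_bound (a : nat -> R) B : (forall k, 0 <= a k) -> (forall k, sum_n a k <= B) -> Series a <= B.
Proof.
  intros Ha Hs. unfold Series.
  assert (H := Lim_seq_le_loc (sum_n a) (fun _ => B) (filter_forall _ Hs)).
  rewrite Lim_seq_const in H.
  destruct (Lim_seq (sum_n a)); simpl in *; auto; try contradiction.
  specialize (Hs 0%nat). rewrite sum_O in Hs. specialize (Ha 0%nat). lra.
Qed.

Lemma PsiM_derive N x0 Lvl c T Lv K ms t :
  is_derive (fun u => PsiM N x0 Lvl c T Lv K u ms) t (dPsiM N x0 Lvl c T Lv K t ms).
Proof.
  unfold PsiM, dPsiM. destruct (excluded_middle_informative (hitm N x0 Lvl ms)).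
  - apply (is_derive_const (K:=R_AbsRing) (V:=R_NormedModule)).
  - unfold PhiF. auto_derive; auto. unfold Rminus. simpl. ring.
Qed.

Lemma PsiM_nonneg N x0 Lvl c T Lv K ms t : 0 <= PsiM N x0 Lvl c T Lv K t ms.
Proof.
  unfold PsiM, PhiF. destruct (excluded_middle_informative (hitm N x0 Lvl ms)); [lra|].
  assert (0 < exp (c * (T - t))) by apply exp_pos.
  assert (0 < exp (AsM ms / K)) by apply exp_pos.
  assert (0 < exp (- (AsM ms / K))) by apply exp_pos.
  assert (0 < exp (- Lv)) by apply exp_pos.
  apply Rmult_le_pos; [|lra]. apply Rmult_le_pos; lra.
Qed.

Theorem proposition9p1 (alpha T a : R) (rp rm : R -> R) (y0 : R)
    (eta : nat -> config) :
  0 < alpha -> 0 < T -> 0 < a < 1 / 2 ->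
  (forall t, ex_derive rp t) -> (forall t, continuous (Derive rp) t) ->
  (forall t, ex_derive rm t) -> (forall t, continuous (Derive rm) t) ->
  (forall t, 0 <= t <= T -> a <= rp t <= 1 - a /\ a <= rm t <= 1 - a) ->
  -1 <= y0 <= 1 ->
  forall M : R, exists L0 : R, forall L : R, L0 <= L ->
    exists N0 : nat, forall N : nat, (1 <= N)%nat -> (N0 <= N)%nat ->
      prob N alpha T rp rm (eta N) (big_current_event N alpha y0 T L)
        <= exp (- M * Rpower (INR N) (1 + alpha)).
Proof.
  intros Hal HT Ha Hdp _ Hdm _ Hrho Hy0 M.
  exists (Rabs M + 5 / 2 * T + 4). intros L HL. exists 0%nat. intros N HN _.
  assert (Hrho' : forall t, 0 <= t <= T -> 0 <= rp t <= 1 /\ 0 <= rm t <= 1).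
  { intros t Ht. destruct (Hrho t Ht). lra. }
  assert (Hcp : forall u, continuous rp u) by (intros u; apply (ex_derive_continuous (K:=R_AbsRing) (V:=R_NormedModule)); auto).
  assert (Hcm : forall u, continuous rm u) by (intros u; apply (ex_derive_continuous (K:=R_AbsRing) (V:=R_NormedModule)); auto).
  set (eta0 := eta N).
  set (x0 := Int_part (INR N * y0)).
  set (P := Rpower (INR N) (1 + alpha)).
  set (Lvl := L * P).
  set (K := 2 * INR N + 2).
  set (c := 5 * Rpower (INR N) (2 + alpha) / K).
  set (Lv := Lvl - (2 * INR N + 1)).
  assert (HN1 : 1 <= INR N) by (apply (le_INR 1); auto).
  assert (HP : 0 < P) by (unfold P, Rpower; apply exp_pos).
  assert (HPN : INR N <= P).
  { unfold P. rewrite Rpower_plus, Rpower_1 by lra.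
    assert (1 <= Rpower (INR N) alpha).
    { unfold Rpower. rewrite <- exp_0. 
      assert (0 <= ln (INR N)).
      { destruct (Req_dec (INR N) 1) as [E|E]; [rewrite E, ln_1; lra|].
        rewrite <- ln_1. left. apply ln_increasing; lra. }
      destruct (Req_dec (alpha * ln (INR N)) 0) as [E|E]; [rewrite E; lra|].
      left. apply exp_increasing. nra. }
    nra. }
  assert (Hx0 : (- Z.of_nat N <= x0 <= Z.of_nat N)%Z).
  { destruct (base_Int_part (INR N * y0)) as [B1 B2]. fold x0 in B1, B2.
    assert (-INR N <= INR N * y0 <= INR N) by (split; nra).
    rewrite INR_IZR_INZ in *. split.
    - assert (IZR (- Z.of_nat N - 1) < IZR x0) by (rewrite minus_IZR, opp_IZR; lra).
      apply lt_IZR in H0. lia.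
    - apply le_IZR. lra. }
  set (Psi := fun (t : R) (xi : config) (h : history) => PsiM N x0 Lvl c T Lv K t (map snd h)).
  set (dPsi := fun (t : R) (xi : config) (h : history) => dPsiM N x0 Lvl c T Lv K t (map snd h)).
  set (SS := fun (s : R) (xi : config) (h : history) =>
     (forall p, In p h -> fst p <= s) /\ sortedh h /\ Inv N eta0 xi (map snd h)).
  set (F := indic (big_current_event N alpha y0 T L)).
  assert (Hmain := super_main N alpha T rp rm F Psi dPsi SS).
  assert (Hbound : forall k, sum_n (fun j => Qk N alpha T rp rm F j 0 eta0 []) k <= Psi 0 eta0 []).
  { intros k. apply Hmain; clear Hmain.
    - intros t xi m Ht. destruct (Hrho' t Ht). apply rate_bounds; auto.
    - intros t xi m. apply rate_cont; auto.
    - intros h. unfold F, indic. destruct (excluded_middle_informative _); lra.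
    - intros xi h [H1 [H2 H3]]. unfold F, indic. destruct (excluded_middle_informative _) as [Hev|Hev].
      + unfold Psi, PsiM. destruct (excluded_middle_informative (hitm N x0 Lvl (map snd h))) as [_|Hn]; [lra|].
        exfalso. apply Hn. destruct Hev as [t [Ht Hl]].
        destruct (current_prefix N h t x0 H2) as [n Hn']. exists n. rewrite <- Hn'.
        unfold hN in Hl. fold x0 P in Hl. rewrite Rabs_div in Hl by lra. rewrite (Rabs_pos_eq P) in Hl by lra.
        unfold Lvl. apply (Rmult_le_compat_r P) in Hl; [|lra].
        unfold Rdiv in Hl. rewrite Rmult_assoc, Rinv_l, Rmult_1_r in Hl by lra. lra.
      + apply PsiM_nonneg.
    - intros t xi h _ _. apply PsiM_nonneg.
    - intros s t xi h Hst [H1 [H2 H3]]. split; [|split; auto]. intros p Hp. specialize (H1 p Hp). lra.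
    - intros t xi h _. apply PsiM_derive.
    - intros xi h m t0. 
      apply (continuous_ext (fun t => PsiM N x0 Lvl c T Lv K t (map snd h ++ [m]))).
      + intros t. unfold Psi. rewrite map_app. reflexivity.
      + apply (der_cont _ t0 (dPsiM N x0 Lvl c T Lv K t0 (map snd h ++ [m]))). apply PsiM_derive.
    - intros t xi h Ht [H1 [H2 H3]]. unfold dPsi, Psi.
      rewrite (sumR_ext_in _ (fun m => rate N alpha rp rm t xi m *
          (PsiM N x0 Lvl c T Lv K t (map snd h ++ [m]) - PsiM N x0 Lvl c T Lv K t (map snd h)))).
      + destruct (Hrho' t Ht). apply (gen_specific N alpha rp rm t T xi eta0 (map snd h) x0 Lvl); auto; lra.
      + intros m _. rewrite map_app. reflexivity.
    - intros t xi h m Ht [H1 [H2 H3]] Hm Hr. split; [|split].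
      + intros p Hp. apply in_app_or in Hp. destruct Hp as [Hp|[Hp|[]]]; [auto|subst p; simpl; lra].
      + apply sortedh_app; auto.
      + rewrite map_app. apply (Inv_step N alpha rp rm t eta0 xi (map snd h) m); auto.
    - lra.
    - split; [intros p []|split; [simpl; auto|]]. split.
      + intros x _. simpl. unfold curM; simpl. destruct (eta0 x); simpl; lia.
      + simpl. unfold AsM. simpl. unfold curM. simpl. apply sumR_zero. }
  assert (Hprob : prob N alpha T rp rm (eta N) (big_current_event N alpha y0 T L) <= Psi 0 eta0 []).
  { unfold prob, expect. apply Series_le_bound; auto.
    intros k. apply Q_nonneg; try lra.
    - intros t xi m Ht. destruct (Hrho' t Ht). apply rate_bounds; auto.
    - intros h. unfold indic. destruct (excluded_middle_informative _); lra. }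
  eapply Rle_trans; [exact Hprob|].
  unfold Psi, PsiM. simpl map.
  destruct (excluded_middle_informative (hitm N x0 Lvl [])) as [Hh|Hh].
  { exfalso. destruct Hh as [n Hn]. rewrite firstn_nil in Hn. unfold curM in Hn. simpl in Hn.
    rewrite Rabs_R0 in Hn. unfold Lvl in Hn. assert (0 < L) by (assert (0 <= Rabs M) by apply Rabs_pos; lra). nra. }
  unfold PhiF, AsM. simpl sumR. replace (0 / K) with 0 by (unfold Rdiv; ring). rewrite Ropp_0, exp_0.
  assert (Hc : c <= 5 / 2 * P).
  { unfold c, K. replace (2 + alpha) with (1 + (1 + alpha)) by ring. rewrite Rpower_plus, Rpower_1 by lra. fold P.
    apply (Rmult_le_reg_r (2 * INR N + 2)); [lra|]. unfold Rdiv. rewrite Rmult_assoc, Rinv_l by lra. nra. }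
  set (X := c * (T - 0) - Lv). set (Y := - M * P).
  assert (HXY : 1 <= Y - X).
  { unfold X, Y, Lv, Lvl. assert (HM : - M <= Rabs M) by (rewrite <- Rabs_Ropp; apply RRle_abs).
    assert (c * T <= 5 / 2 * P * T) by nra.
    assert (L * P >= (Rabs M + 5 / 2 * T + 4) * P) by (apply Rle_ge, Rmult_le_compat_r; lra).
    assert (HM2 : M <= Rabs M) by apply RRle_abs.
    assert (- M * P >= - Rabs M * P) by (apply Rle_ge, Rmult_le_compat_r; lra).
    replace (T - 0) with T by ring. nra. }
  assert (E1 := exp_ineq1_le (Y - X)).
  assert (E2 : exp Y = exp (Y - X) * exp X) by (rewrite <- exp_plus; f_equal; ring).
  assert (E3 : exp (c * (T - 0)) * (1 + 1) * exp (- Lv) = 2 * exp X) by (unfold X; unfold Rminus at 2; rewrite exp_plus; ring).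
  rewrite E3. fold P. fold Y. rewrite E2. assert (0 < exp X) by apply exp_pos. nra.
Qed.
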